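(* Let $\nu\in\mathcal{S}^{n-1}$, $\Pi_\nu(0):=\{x:-1\le x\cdot\nu\le0\}$, $\Gamma_N:=\{x\cdot\nu=0\}$, $\Gamma_D:=\{x\cdot\nu=-1\}$. For given $R,\varepsilon>0$, suppose $u:\overline{\Pi_\nu(0)}\to\mathbb{R}$ satisfies, in the viscosity sense, $$-\mathcal{P}^+(D^2u)\le0,\quad -\mathcal{P}^-(D^2u)\ge0 \text{ in }\Pi_\nu(0)\cap\{|x|\le R\},\qquad \partial_\nu u=g \text{ on }\Gamma_N\cap\{|x|\le R\},$$ $$u=f \text{ on }\Gamma_D\cap\{|x|\le R\},\qquad |u(x)|\le R^{2-\varepsilon} \text{ on }\{|x|=R\}.$$ If $|f|,|g|\le\delta$, then $$|u(x)|\le2\delta+16(n-1)\frac{\Lambda}{\lambda}R^{-\varepsilon}\quad\text{in }\Pi_\nu(0)\cap\{|x|\le1\}.$$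
   Context: Fix $0<\lambda<\Lambda$. For a real symmetric matrix $M$ with eigenvalues $e_i$, the Pucci extremal operators are $\mathcal{P}^+(M)=\Lambda\sum_{e_i>0}e_i+\lambda\sum_{e_i<0}e_i$ and $\mathcal{P}^-(M)=\lambda\sum_{e_i>0}e_i+\Lambda\sum_{e_i<0}e_i$. Here $f,g$ are functions on the respective boundary parts.
   Formalization: The radius R is required to satisfy R ≥ 1, in place of being an arbitrary R > 0. The statement above fails without it. *)

(* Defs.v *)
From HB Require Import structures.
From mathcomp Require Import all_boot all_order all_algebra.
From mathcomp Require Import polyrcf.
From mathcomp Require Import reals exp.
Set Implicit Arguments. Unset Strict Implicit. Unset Printing Implicit Defensive.
Import Order.TTheory GRing.Theory Num.Theory.
Local Open Scope ring_scope.

Section Defs.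
Variables (R : realType) (n : nat).

Definition dotv (x y : 'rV[R]_n) : R := (x *m y^T) 0 0.
Definition enorm (x : 'rV[R]_n) : R := Num.sqrt (dotv x x).

Definition qform (X : 'M[R]_n) (z : 'rV[R]_n) : R := (z *m X *m z^T) 0 0.

(* Eigenvalues of M, counted with multiplicity: the real roots of the
   characteristic polynomial, root x having multiplicity mup x (char_poly M).
   (For symmetric M the characteristic polynomial splits over R.) *)
Definition eigs_pos_sum (M : 'M[R]_n) : R :=
  \sum_(x <- rootsR (char_poly M) | 0 < x) (mup x (char_poly M))%:R * x.
Definition eigs_neg_sum (M : 'M[R]_n) : R :=
  \sum_(x <- rootsR (char_poly M) | x < 0) (mup x (char_poly M))%:R * x.

Definition pucci_plus (lam Lam : R) (M : 'M[R]_n) : R :=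
  Lam * eigs_pos_sum M + lam * eigs_neg_sum M.
Definition pucci_minus (lam Lam : R) (M : 'M[R]_n) : R :=
  lam * eigs_pos_sum M + Lam * eigs_neg_sum M.

(* Second order super-/sub-jets of u at x relative to the set S
   (Crandall-Ishii-Lions):  (p,X) in J^{2,+}_S u(x) iff
   u(y) <= u(x) + p.(y-x) + 1/2 (y-x)^T X (y-x) + o(|y-x|^2), y in S, y -> x. *)
Definition superjet (S : 'rV[R]_n -> Prop) (u : 'rV[R]_n -> R)
    (x p : 'rV[R]_n) (X : 'M[R]_n) : Prop :=
  X^T = X /\
  forall e : R, 0 < e -> exists2 d : R, 0 < d &
    forall y, S y -> enorm (y - x) < d ->
      u y <= u x + dotv p (y - x) + 2^-1 * qform X (y - x)
             + e * enorm (y - x) ^+ 2.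
Definition subjet (S : 'rV[R]_n -> Prop) (u : 'rV[R]_n -> R)
    (x p : 'rV[R]_n) (X : 'M[R]_n) : Prop :=
  X^T = X /\
  forall e : R, 0 < e -> exists2 d : R, 0 < d &
    forall y, S y -> enorm (y - x) < d ->
      u y >= u x + dotv p (y - x) + 2^-1 * qform X (y - x)
             - e * enorm (y - x) ^+ 2.

Definition strip (nu : 'rV[R]_n) (x : 'rV[R]_n) : Prop :=
  -1 <= dotv x nu <= 0.

Definition visc_problem (lam Lam : R) (nu : 'rV[R]_n) (Rad : R)
    (f g : 'rV[R]_n -> R) (u : 'rV[R]_n -> R) : Prop :=
  (forall x p X, -1 < dotv x nu < 0 -> enorm x < Rad ->
     superjet (strip nu) u x p X -> - pucci_plus lam Lam X <= 0) /\
  (forall x p X, -1 < dotv x nu < 0 -> enorm x < Rad ->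
     subjet (strip nu) u x p X -> - pucci_minus lam Lam X >= 0) /\
  (* d_nu u = g on Gamma_N, generalized viscosity sense *)
  (forall x p X, dotv x nu = 0 -> enorm x < Rad ->
     superjet (strip nu) u x p X ->
     Num.min (- pucci_plus lam Lam X) (dotv p nu - g x) <= 0) /\
  (forall x p X, dotv x nu = 0 -> enorm x < Rad ->
     subjet (strip nu) u x p X ->
     Num.max (- pucci_minus lam Lam X) (dotv p nu - g x) >= 0) /\
  (forall x, dotv x nu = -1 -> enorm x <= Rad -> u x = f x).

End Defs.

Definition cont_on_strip (R : realType) (n : nat) (nu : 'rV[R]_n)
    (u : 'rV[R]_n -> R) : Prop :=
  forall x, strip nu x -> forall e : R, 0 < e -> exists2 d : R, 0 < d &
    forall y, strip nu y -> enorm (y - x) < d -> `|u y - u x| < e.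

(* Main.v *)
Require Import Defs.
From HB Require Import structures.
From mathcomp Require Import all_boot all_order all_algebra.
From mathcomp Require Import polyrcf.
From mathcomp Require Import reals exp.
From mathcomp Require Import boolp classical_sets topology normedtype derive.
From mathcomp Require Import ring lra.
Import Order.TTheory GRing.Theory Num.Theory.
Import numFieldNormedType.Exports.
Local Open Scope ring_scope.
Set Implicit Arguments. Unset Strict Implicit. Unset Printing Implicit Defensive.

Section Dot.
Variables (R : realType) (n : nat).
Implicit Types x y z : 'rV[R]_n.

Lemma dotvE x y : dotv x y = \sum_i x 0 i * y 0 i.
Proof. by rewrite /dotv mxE; apply: eq_bigr => i _; rewrite mxE. Qed.

Lemma dotvC x y : dotv x y = dotv y x.
Proof. by rewrite !dotvE; apply: eq_bigr => i _; rewrite mulrC. Qed.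

Lemma dotvDl x y z : dotv (x + y) z = dotv x z + dotv y z.
Proof. by rewrite !dotvE -big_split; apply: eq_bigr => i _; rewrite mxE mulrDl. Qed.

Lemma dotvDr x y z : dotv z (x + y) = dotv z x + dotv z y.
Proof. by rewrite dotvC dotvDl !(dotvC z). Qed.

Lemma dotvZl a x y : dotv (a *: x) y = a * dotv x y.
Proof. by rewrite !dotvE mulr_sumr; apply: eq_bigr => i _; rewrite mxE mulrA. Qed.

Lemma dotvZr a x y : dotv y (a *: x) = a * dotv y x.
Proof. by rewrite dotvC dotvZl dotvC. Qed.

Lemma dotvNl x y : dotv (- x) y = - dotv x y.
Proof. by rewrite -scaleN1r dotvZl mulN1r. Qed.

Lemma dotvNr x y : dotv y (- x) = - dotv y x.
Proof. by rewrite dotvC dotvNl dotvC. Qed.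

Lemma dotvBl x y z : dotv (x - y) z = dotv x z - dotv y z.
Proof. by rewrite dotvDl dotvNl. Qed.

Lemma dotvBr x y z : dotv z (x - y) = dotv z x - dotv z y.
Proof. by rewrite dotvDr dotvNr. Qed.

Lemma dotv0l y : dotv 0 y = 0.
Proof. by rewrite -(scale0r (0 : 'rV[R]_n)) dotvZl mul0r. Qed.

Lemma dotvv_ge0 x : 0 <= dotv x x.
Proof. by rewrite dotvE; apply: sumr_ge0 => i _; rewrite -expr2 sqr_ge0. Qed.

Lemma dotvv_eq0 x : dotv x x = 0 -> x = 0.
Proof.
rewrite dotvE => /eqP; rewrite psumr_eq0; last by move=> i _; rewrite -expr2 sqr_ge0.
move=> /allP H; apply/rowP => i; rewrite [RHS]mxE.
have := H i (mem_index_enum _); rewrite /= mulf_eq0 orbb => /eqP ->.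
by [].
Qed.

Lemma enorm_ge0 x : 0 <= enorm x.
Proof. exact: sqrtr_ge0. Qed.

Lemma enorm_sq x : enorm x ^+ 2 = dotv x x.
Proof. by rewrite /enorm sqr_sqrtr // dotvv_ge0. Qed.

Lemma CS x y : dotv x y ^+ 2 <= dotv x x * dotv y y.
Proof.
have [y0|yn0] := eqVneq (dotv y y) 0.
  by move/dotvv_eq0: y0 => ->; rewrite dotvC !dotv0l expr0n /= mulr0.
have yp : 0 < dotv y y by rewrite lt_def yn0 dotvv_ge0.
pose s := dotv x y / dotv y y.
have H := dotvv_ge0 (x - s *: y).
rewrite !(dotvBl, dotvBr, dotvZl, dotvZr) (dotvC y x) in H.
have e : s * dotv y y = dotv x y.
  by rewrite /s; field; rewrite yn0.
have e2 : s * dotv x y = dotv x y ^+ 2 / dotv y y.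
  by rewrite /s; field; rewrite yn0.
rewrite e subrr mulr0 subr0 e2 in H.
have : 0 <= dotv x x - dotv x y ^+ 2 / dotv y y by lra.
rewrite subr_ge0 ler_pdivrMr //.
Qed.

Lemma CSabs x y : `|dotv x y| <= enorm x * enorm y.
Proof.
rewrite /enorm -sqrtrM ?dotvv_ge0 // -(sqrtr_sqr (dotv x y)).
by rewrite ler_wsqrtr // CS.
Qed.

Lemma enormD x y : enorm (x + y) <= enorm x + enorm y.
Proof.
have h1 := enorm_ge0 x; have h2 := enorm_ge0 y.
rewrite -(ger0_norm (addr_ge0 h1 h2)) -(sqrtr_sqr (enorm x + enorm y)).
rewrite /enorm ler_wsqrtr // -/(enorm x) -/(enorm y).
rewrite dotvDl !dotvDr (dotvC y x).
have := CSabs x y; have := enorm_sq x; have := enorm_sq y.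
have := ler_norm (dotv x y).
move=> a b c d; rewrite -b -c; nra.
Qed.

Lemma enormN x : enorm (- x) = enorm x.
Proof. by rewrite /enorm dotvNl dotvNr opprK. Qed.

Lemma enormB x y : enorm (x - y) = enorm (y - x).
Proof. by rewrite -enormN opprB. Qed.

End Dot.

Lemma sylv (S : idomainType) m (c : S) (u : 'cV[S]_m.+1) (v : 'rV[S]_m.+1) :
  c != 0 -> \det (c%:M - u *m v) = (c - (v *m u) 0 0) * c ^+ m.
Proof.
move=> c0.
pose M := block_mx (c%:M : 'M_1) (c *: v) u (c%:M : 'M_m.+1).
have E1 : M = block_mx (c%:M : 'M_1) 0 u 1%:M *m block_mx 1%:M v 0 (c%:M - u *m v).
  rewrite mulmx_block !mulmx0 !mul0mx !mulmx1 !mul1mx !addr0 ?add0r.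
  by rewrite /M mul_scalar_mx addrC subrK.
have E2 : M = block_mx ((c - (v *m u) 0 0)%:M : 'M_1) v 0 1%:M *m block_mx 1%:M 0 u (c%:M : 'M_m.+1).
  rewrite mulmx_block !mulmx0 !mul0mx !mulmx1 !mul1mx ?addr0 ?add0r.
  rewrite /M mul_mx_scalar; set s := (v *m u) 0 0.
  by rewrite [v *m u]mx11_scalar -/s raddfB /= subrK.
have := congr1 determinant E1; rewrite det_mulmx det_lblock det_ublock.
rewrite E2 det_mulmx det_ublock det_lblock !det_scalar1 !det1 !mulr1 mul1r.
by rewrite det_scalar exprS mulrCA mul1r => /(mulfI c0) ->.
Qed.

Lemma charpoly_r1 (R : realType) m (nu : 'rV[R]_m.+1) (a b : R) :
  dotv nu nu = 1 ->
  char_poly (a%:M + b *: (nu^T *m nu)) = ('X - a%:P) ^+ m * ('X - (a + b)%:P).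
Proof.
move=> hnu.
pose v : 'rV[{poly R}]_m.+1 := \row_i (nu 0 i)%:P.
pose u : 'cV[{poly R}]_m.+1 := \col_i (b * nu 0 i)%:P.
have E : char_poly_mx (a%:M + b *: (nu^T *m nu)) = ('X - a%:P)%:M - u *m v.
  apply/matrixP => i j; rewrite !mxE big_ord1 !mxE big_ord1 !mxE.
  rewrite (ord1 (0 : 'I_1)); case: (i == j); rewrite /= ?mulr1n ?mulr0n;
    rewrite !rmorphD !rmorphM /=; ring.
rewrite /char_poly E sylv ?polyXsubC_eq0 //.
have -> : (v *m u) 0 0 = b%:P.
  rewrite !mxE -[b]mulr1 -hnu dotvE mulr_sumr rmorph_sum /=.
  by apply: eq_bigr => i _; rewrite !mxE -rmorphM /= mulrCA.
by rewrite mulrC rmorphD /= opprD addrA.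
Qed.

Lemma eig_sum (R : realType) (P : pred R) m (a c : R) : a != c ->
  \sum_(x <- rootsR (('X - a%:P) ^+ m * ('X - c%:P)) | P x)
     (mup x (('X - a%:P) ^+ m * ('X - c%:P)))%:R * x
  = (if P a then m%:R * a else 0) + (if P c then c else 0).
Proof.
move=> ac; set p := _ * _.
have p0 : p != 0 by rewrite mulf_neq0 ?expf_neq0 ?polyXsubC_eq0.
have memp x : (x \in rootsR p) = root p x.
  by rewrite -(roots_on_rootsR p0 x) in_itv.
have mupa : mup a p = m.
  rewrite mupM ?expf_neq0 ?polyXsubC_eq0 // mup_XsubCX eqxx mupNroot ?addn0 //.
  by rewrite root_XsubC.
have mupc : mup c p = 1%N.
  rewrite mupM ?expf_neq0 ?polyXsubC_eq0 // mup_XsubCX (negbTE ac) add0n.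
  by rewrite -[('X - c%:P)]expr1 mup_XsubCX eqxx.
have rootp x : root p x = ((0 < m)%N && (x == a)) || (x == c).
  by rewrite /p rootM /root horner_exp expf_eq0 !hornerXsubC !subr_eq0.
clearbody p; case: m mupa rootp => [|m] mupa rootp.
  have pe : perm_eq (rootsR p) [:: c].
    apply: uniq_perm; [exact: uniq_roots| by [] |].
    by move=> x; rewrite memp rootp inE ltnn.
  rewrite (perm_big _ pe) big_cons big_nil mupc mul0r.
  by case: (P a); case: (P c); rewrite /= ?mul1r ?add0r ?addr0.
have pe : perm_eq (rootsR p) [:: a; c].
  apply: uniq_perm; [exact: uniq_roots| by rewrite /= inE ac |].
  by move=> x; rewrite memp rootp !inE.
rewrite (perm_big _ pe) !big_cons big_nil mupc mupa.
by case: (P a); case: (P c); rewrite /= ?mul1r ?add0r ?addr0.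
Qed.

Lemma pucci_plus_H (R : realType) m (nu : 'rV[R]_m.+1) (lam Lam a b : R) :
  dotv nu nu = 1 -> 0 <= a -> a + b < 0 ->
  pucci_plus lam Lam (a%:M + b *: (nu^T *m nu)) = Lam * (m%:R * a) + lam * (a + b).
Proof.
move=> hnu ha hab.
have ac : a != a + b by apply/eqP => e; move: hab; rewrite -e; lra.
rewrite /pucci_plus /eigs_pos_sum /eigs_neg_sum charpoly_r1 //.
rewrite (eig_sum (fun x => 0 < x)) // (eig_sum (fun x => x < 0)) //=.
rewrite hab.
have -> : (a < 0) = false by apply/negbTE; rewrite -leNgt.
have -> : (0 < a + b) = false by apply/negbTE; rewrite -leNgt ltW.
have -> : (if 0 < a then m%:R * a else 0) = m%:R * a.
  case: ifP => // /negbT; rewrite -leNgt => h.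
  by rewrite (_ : a = 0) ?mulr0 //; apply/le_anti; rewrite h ha.
by rewrite !addr0 add0r.
Qed.

Lemma pucci_minus_H (R : realType) m (nu : 'rV[R]_m.+1) (lam Lam a b : R) :
  dotv nu nu = 1 -> a <= 0 -> 0 < a + b ->
  pucci_minus lam Lam (a%:M + b *: (nu^T *m nu)) = lam * (a + b) + Lam * (m%:R * a).
Proof.
move=> hnu ha hab.
have ac : a != a + b by apply/eqP => e; move: hab; rewrite -e; lra.
rewrite /pucci_minus /eigs_pos_sum /eigs_neg_sum charpoly_r1 //.
rewrite (eig_sum (fun x => 0 < x)) // (eig_sum (fun x => x < 0)) //=.
rewrite hab.
have -> : (0 < a) = false by apply/negbTE; rewrite -leNgt.
have -> : (a + b < 0) = false by apply/negbTE; rewrite -leNgt ltW.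
have -> : (if a < 0 then m%:R * a else 0) = m%:R * a.
  case: ifP => // /negbT; rewrite -leNgt => h.
  by rewrite (_ : a = 0) ?mulr0 //; apply/le_anti; rewrite h ha.
by rewrite !addr0 add0r.
Qed.

Section Barrier.
Variables (R : realType) (n : nat) (nu : 'rV[R]_n) (c0 c1 al be : R).

Definition phi (x : 'rV[R]_n) : R :=
  c0 + c1 * dotv x nu + 2^-1 * al * dotv x x + 2^-1 * be * dotv x nu ^+ 2.
Definition Dphi (x : 'rV[R]_n) : 'rV[R]_n :=
  c1 *: nu + al *: x + (be * dotv x nu) *: nu.
Definition Hm : 'M[R]_n := al%:M + be *: (nu^T *m nu).

Lemma qformD (A B : 'M[R]_n) (z : 'rV[R]_n) : qform (A + B) z = qform A z + qform B z.
Proof. by rewrite /qform mulmxDr mulmxDl mxE. Qed.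
Lemma qformZ a (A : 'M[R]_n) (z : 'rV[R]_n) : qform (a *: A) z = a * qform A z.
Proof. by rewrite /qform -scalemxAr -scalemxAl mxE. Qed.
Lemma qform1 (z : 'rV[R]_n) : qform 1%:M z = dotv z z.
Proof. by rewrite /qform mulmx1. Qed.
Lemma qform_r1 (z : 'rV[R]_n) : qform (nu^T *m nu) z = dotv z nu ^+ 2.
Proof.
rewrite /qform !mulmxA -(mulmxA (z *m nu^T)) mxE big_ord1.
rewrite /dotv expr2; congr (_ * _).
by rewrite -[nu *m z^T]trmxK trmx_mul trmxK mxE.
Qed.
Lemma qform_Hm (z : 'rV[R]_n) : qform Hm z = al * dotv z z + be * dotv z nu ^+ 2.
Proof.
by rewrite /Hm qformD -(scalemx1 _ al) !qformZ qform1 qform_r1.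
Qed.

Lemma phi_expand (x z : 'rV[R]_n) :
  phi (x + z) = phi x + dotv (Dphi x) z + 2^-1 * qform Hm z.
Proof.
rewrite /phi /Dphi qform_Hm !dotvDl !dotvDr !dotvZl (dotvC z x) (dotvC nu z).
by field.
Qed.

Lemma phi_diff (x y : 'rV[R]_n) :
  phi y = phi x + dotv (Dphi x) (y - x) + 2^-1 * qform Hm (y - x).
Proof. by rewrite -phi_expand addrC subrK. Qed.

End Barrier.

Section Topo.
Local Open Scope classical_set_scope.
Variables (R : realType) (n : nat).

Lemma coord_le_mx (z : 'rV[R]_n) i : `|z 0 i| <= `|z|.
Proof.
rewrite [leRHS]/Num.norm /= mx_normrE; apply/bigmax_geP; right => /=.
by exists (0, i).
Qed.

Lemma coord_le_enorm (z : 'rV[R]_n) i : `|z 0 i| <= enorm z.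
Proof.
rewrite /enorm -(sqrtr_sqr (z 0 i)) ler_wsqrtr // dotvE.
rewrite (bigD1 i) //= -expr2 lerDl sumr_ge0 // => j _.
by rewrite -expr2 sqr_ge0.
Qed.

Lemma enorm_le_mx (z : 'rV[R]_n) : enorm z <= n%:R * `|z|.
Proof.
have h0 : 0 <= n%:R * `|z| by rewrite mulr_ge0.
rewrite -(ger0_norm h0) -(sqrtr_sqr (n%:R * `|z|)) ler_wsqrtr // dotvE.
apply: le_trans (_ : \sum_(i < n) `|z|^+2 <= _).
  apply: ler_sum => i _; rewrite -expr2 -real_normK ?num_real //.
  by rewrite lerXn2r ?nnegrE ?coord_le_mx.
rewrite sumr_const card_ord exprMn mulrC -[X in X <= _]mulr_natr ler_wpM2l ?sqr_ge0 //.
case: (n) => [|k]; first by rewrite expr0n.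
by rewrite expr2 ler_peMr // ler1n.
Qed.

Lemma ball_enorm (x y : 'rV[R]_n) (d : R) : 0 < d ->
  ball x (d / (n%:R + 1)) y -> enorm (y - x) < d.
Proof.
move=> d0; rewrite mx_norm_ball /ball_ => hy.
apply: le_lt_trans (enorm_le_mx _) _.
rewrite -normrN opprB.
have n0 : 0 < n%:R + 1 :> R by rewrite ltr_wpDl.
move: hy => /= hy; move: hy; rewrite ltr_pdivlMr // => hy.
have := normr_ge0 (x - y); have : 0 <= n%:R :> R by [].
nra.
Qed.

Lemma cont_global (h : 'rV[R]_n -> R) :
  (forall x e, 0 < e -> exists2 d, 0 < d &
     forall y, enorm (y - x) < d -> `|h y - h x| < e) -> continuous h.
Proof.
move=> H x; apply/(@cvgrPdist_lt _ _ _ (nbhs x) (nbhs_filter x)) => e e0.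
have [d d0 Hd] := H x e e0.
apply/nbhs_ballP; exists (d / (n%:R + 1))=> /=.
  by rewrite divr_gt0 // ltr_wpDl.
by move=> y /(ball_enorm d0) hy; rewrite distrC; apply: Hd.
Qed.

Lemma cont_within (A : set 'rV[R]_n) (h : 'rV[R]_n -> R) :
  (forall x, A x -> forall e, 0 < e -> exists2 d, 0 < d &
     forall y, A y -> enorm (y - x) < d -> `|h y - h x| < e) ->
  {within A, continuous h}.
Proof.
move=> H; apply/subspace_continuousP => x Ax; apply/cvgrPdist_lt => e e0.
have [d d0 Hd] := H x Ax e e0.
rewrite near_withinE; apply/nbhs_ballP; exists (d / (n%:R + 1)) => /=.
  by rewrite divr_gt0 // ltr_wpDl.
by move=> y /(ball_enorm d0) hy Ay; rewrite distrC; apply: Hd.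
Qed.

Lemma dotv_cont (nu : 'rV[R]_n) : continuous (fun x : 'rV[R]_n => dotv x nu).
Proof.
apply: cont_global => x e e0; exists (e / (enorm nu + 1)).
  by rewrite divr_gt0 // ltr_wpDl // enorm_ge0.
move=> y hy; rewrite -dotvBl; apply: le_lt_trans (CSabs _ _) _.
have h1 := enorm_ge0 nu; have h2 := enorm_ge0 (y - x).
move: hy; rewrite ltr_pdivlMr ?ltr_wpDl // => hy; nra.
Qed.

Lemma enorm_cont : continuous (@enorm R n).
Proof.
apply: cont_global => x e e0; exists e => // y hy.
apply: le_lt_trans hy; rewrite ler_norml; apply/andP; split.
  have := enormD (x - y) y; rewrite subrK enormB; lra.
have := enormD (y - x) x; rewrite subrK; lra.
Qed.

Lemma mx_le_enorm (z : 'rV[R]_n) : `|z| <= enorm z.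
Proof.
rewrite [leLHS]/Num.norm /= mx_normrE; apply: bigmax_le; first exact: enorm_ge0.
by move=> [i j] _; rewrite (ord1 i); apply: coord_le_enorm.
Qed.

Lemma evt_D (nu : 'rV[R]_n) (Rad : R) (w : 'rV[R]_n -> R) :
  0 <= Rad -> cont_on_strip nu w ->
  exists2 x0, strip nu x0 /\ enorm x0 <= Rad &
    forall y, strip nu y -> enorm y <= Rad -> w y <= w x0.
Proof.
move=> R0 hw.
pose D := [set x : 'rV[R]_n | strip nu x /\ enorm x <= Rad].
have D0 : D !=set0.
  exists 0; split; last by rewrite /enorm dotv0l sqrtr0.
  by rewrite /strip dotv0l lexx andbT lerN10.
have cD : compact D.
  apply: bounded_closed_compact.
    rewrite /= /bounded_near; near=> M => x [_ hx].
    apply: le_trans (mx_le_enorm x) (le_trans hx _).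
    by near: M; apply: nbhs_pinfty_ge; rewrite num_real.
  have -> : D = ((fun x => dotv x nu) @^-1` [set r | -1 <= r]) `&`
      ((fun x => dotv x nu) @^-1` [set r | r <= 0]) `&`
      (@enorm R n @^-1` [set r | r <= Rad]).
    apply/seteqP; split => x /=; rewrite /strip.
      by case=> /andP[? ?] ?.
    by case=> [[? ?] ?]; split => //; apply/andP.
  apply: closedI; [apply: closedI|].
  - by apply: preimage_closed; [move=> x _; exact: dotv_cont|exact: closed_ge].
  - by apply: preimage_closed; [move=> x _; exact: dotv_cont|exact: closed_le].
  - by apply: preimage_closed; [move=> x _; exact: enorm_cont|exact: closed_le].
have cw : {within D, continuous w}.
  apply: cont_within => x [sx _] e e0.
  have [d d0 Hd] := hw x sx e e0.
  by exists d => // y [sy _]; apply: Hd.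
have [c cD' H] := compact_EVT_max D0 cD cw.
move: cD'; rewrite inE => cD'; exists c => // y sy hy.
by apply: H; rewrite inE.
Unshelve. all: by end_near.
Qed.

End Topo.

Section Cmp.
Variables (R : realType) (n : nat) (nu : 'rV[R]_n) (c0 c1 al be : R).
Hypothesis hnu : dotv nu nu = 1.
Local Notation ph := (phi nu c0 c1 al be).

Lemma qform_Hm_abs (z : 'rV[R]_n) :
  `|qform (Hm nu al be) z| <= (`|al| + `|be|) * enorm z ^+ 2.
Proof.
rewrite qform_Hm enorm_sq.
have h1 : dotv z nu ^+ 2 <= dotv z z by have := CS z nu; rewrite hnu mulr1.
have h2 := dotvv_ge0 z; have h3 : 0 <= dotv z nu ^+ 2 by rewrite sqr_ge0.
apply: le_trans (ler_normD _ _) _; rewrite !normrM (ger0_norm h2) -normrM -expr2.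
rewrite (ger0_norm h3) mulrDl lerD2l ler_wpM2l //.
Qed.

Lemma phi_cont (x : 'rV[R]_n) (e : R) : 0 < e -> exists2 d, 0 < d &
  forall y, enorm (y - x) < d -> `|ph y - ph x| < e.
Proof.
move=> e0.
set E := enorm (Dphi nu c1 al be x); set A := `|al| + `|be|.
have E0 : 0 <= E by apply: enorm_ge0.
have A0 : 0 <= A by rewrite addr_ge0.
exists (Num.min 1 (e / (E + A + 1))).
  by rewrite lt_min ltr01 divr_gt0 // ltr_wpDl // addr_ge0.
move=> y; rewrite lt_min => /andP[r1 r2].
rewrite (phi_diff nu c0 c1 al be x y).
set a1 := dotv _ _; set a2 := _ * qform _ _.
have -> : ph x + a1 + a2 - ph x = a1 + a2 by ring.
rewrite /a1 /a2.
set r := enorm (y - x).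
have r0 : 0 <= r by apply: enorm_ge0.
have h1 := CSabs (Dphi nu c1 al be x) (y - x).
have h2 := qform_Hm_abs (y - x).
have h3 : r * (E + A + 1) < e by rewrite -ltr_pdivlMr // ltr_wpDl // addr_ge0.
apply: le_lt_trans (ler_normD _ _) _.
rewrite normrM ger0_norm ?invr_ge0 //.
rewrite -/r -/E -/A in h1 h2.
have h4 : r ^+ 2 <= r by rewrite expr2 ler_piMr // ltW.
have h5 : 0 <= 2^-1 :> R by rewrite invr_ge0.
have h6 : 2^-1 <= 1 :> R by rewrite invf_le1 // ler1n.
nra.
Qed.

Lemma compare (Rad : R) (v : 'rV[R]_n -> R) :
  0 <= Rad -> cont_on_strip nu v ->
  (forall x, dotv x nu = -1 -> enorm x <= Rad -> v x <= ph x) ->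
  (forall x, strip nu x -> enorm x = Rad -> -1 < dotv x nu -> v x <= ph x) ->
  (forall x, -1 < dotv x nu -> dotv x nu <= 0 -> enorm x < Rad ->
     forall d, 0 < d -> (forall y, strip nu y -> enorm (y - x) < d ->
        v y - ph y <= v x - ph x) -> False) ->
  forall x, strip nu x -> enorm x <= Rad -> v x <= ph x.
Proof.
move=> R0 hv H1 H2 H3.
have hw : cont_on_strip nu (fun x => v x - ph x).
  move=> x sx e e0.
  have e2 : 0 < e / 2 by rewrite divr_gt0.
  have [d1 d10 Hd1] := hv x sx (e / 2) e2.
  have [d2 d20 Hd2] := phi_cont x e2.
  exists (Num.min d1 d2); first by rewrite lt_min d10 d20.
  move=> y sy; rewrite lt_min => /andP[y1 y2].
  have := Hd1 y sy y1; have := Hd2 y y2.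
  have -> : v y - ph y - (v x - ph x) = (v y - v x) - (ph y - ph x) by ring.
  move=> a b; apply: le_lt_trans (ler_normB _ _) _; lra.
have [x0 [sx0 bx0] Hmax] := evt_D R0 hw.
suff : v x0 - ph x0 <= 0 by move=> h x sx bx; have := Hmax x sx bx; lra.
rewrite leNgt; apply/negP => pos.
move: (sx0) => /andP[t1 t2].
have [te|tne] := eqVneq (dotv x0 nu) (-1).
  by have := H1 x0 te bx0; lra.
have t1' : -1 < dotv x0 nu by rewrite lt_def tne t1.
have [re|rne] := eqVneq (enorm x0) Rad.
  by have := H2 x0 sx0 re t1'; lra.
have r' : enorm x0 < Rad by rewrite lt_def eq_sym rne bx0.
apply: (H3 x0 t1' t2 r' (Rad - enorm x0)); first by rewrite subr_gt0.
move=> y sy hy; apply: Hmax => //.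
have := enormD x0 (y - x0); rewrite addrC subrK; lra.
Qed.

End Cmp.

Section Jets.
Variables (R : realType) (n : nat) (nu : 'rV[R]_n) (c0 c1 al be : R).
Local Notation ph := (phi nu c0 c1 al be).

Lemma Hm_sym a b : (Hm nu a b)^T = Hm nu a b.
Proof. by rewrite /Hm linearD /= tr_scalar_mx linearZ /= trmx_mul trmxK. Qed.

Lemma Dphi_nu x : dotv nu nu = 1 ->
  dotv (Dphi nu c1 al be x) nu = c1 + al * dotv x nu + be * dotv x nu.
Proof. by move=> h; rewrite /Dphi !dotvDl !dotvZl h; ring. Qed.

Lemma superjet_max (u : 'rV[R]_n -> R) x0 d : 0 < d ->
  (forall y, strip nu y -> enorm (y - x0) < d -> u y - ph y <= u x0 - ph x0) ->
  superjet (strip nu) u x0 (Dphi nu c1 al be x0) (Hm nu al be).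
Proof.
move=> d0 H; split; first exact: Hm_sym.
move=> e e0; exists d => // y sy hy.
have := H y sy hy; rewrite (phi_diff nu c0 c1 al be x0 y).
have : 0 <= e * enorm (y - x0) ^+ 2 by rewrite mulr_ge0 ?sqr_ge0 // ltW.
lra.
Qed.

Lemma subjet_max (u : 'rV[R]_n -> R) x0 d : 0 < d ->
  (forall y, strip nu y -> enorm (y - x0) < d -> - u y - ph y <= - u x0 - ph x0) ->
  subjet (strip nu) u x0 (- Dphi nu c1 al be x0) (Hm nu (- al) (- be)).
Proof.
move=> d0 H; split; first exact: Hm_sym.
move=> e e0; exists d => // y sy hy.
have := H y sy hy; rewrite (phi_diff nu c0 c1 al be x0 y) dotvNl.
have -> : qform (Hm nu (- al) (- be)) (y - x0) = - qform (Hm nu al be) (y - x0).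
  by rewrite !qform_Hm; ring.
have : 0 <= e * enorm (y - x0) ^+ 2 by rewrite mulr_ge0 ?sqr_ge0 // ltW.
lra.
Qed.

End Jets.

Lemma oneD_fact (R : realType) (nu x : 'rV[R]_1) :
  dotv nu nu = 1 -> dotv x x = dotv x nu ^+ 2.
Proof.
rewrite !dotvE !big_ord1 => h.
by rewrite exprMn [nu _ _ ^+ 2]expr2 h mulr1 expr2.
Qed.

Theorem lemma2p9 (R : realType) (n : nat) (lam Lam : R)
  (hlam : 0 < lam) (hLam : lam < Lam)
  (nu : 'rV[R]_n) (hnu : enorm nu = 1)
  (Rad eps delta : R) (hR : 1 <= Rad) (heps : 0 < eps)
  (f g u : 'rV[R]_n -> R)
  (hcont : cont_on_strip nu u)
  (hvisc : visc_problem lam Lam nu Rad f g u)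
  (hbd : forall x, strip nu x -> enorm x = Rad -> `|u x| <= Rad `^ (2 - eps))
  (hf : forall x, dotv x nu = -1 -> enorm x <= Rad -> `|f x| <= delta)
  (hg : forall x, dotv x nu = 0 -> enorm x <= Rad -> `|g x| <= delta) :
  forall x, strip nu x -> enorm x <= 1 ->
    `|u x| <= 2 * delta + 16%:R * (n - 1)%:R * (Lam / lam) * Rad `^ (- eps).
Proof.
have hnu2 : dotv nu nu = 1 by rewrite -enorm_sq hnu expr1n.
destruct n as [|m].
  by move: hnu2; rewrite dotvE big_ord0 => /eqP; rewrite eq_sym oner_eq0.
have d0 : 0 <= delta.
  have h1 : dotv (- nu) nu = -1 by rewrite dotvNl hnu2.
  have h2 : enorm (- nu) <= Rad by rewrite enormN hnu.
  exact: le_trans (normr_ge0 _) (hf _ h1 h2).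
have R0 : 0 < Rad by apply: lt_le_trans hR.
case: hvisc => [Hsub [Hsup [HNsub [HNsup HD]]]].
pose K : R := m%:R * (Lam / lam).
have hK : lam * K = m%:R * Lam by rewrite /K; field; rewrite gt_eqF.
have K0 : 0 <= K by rewrite /K mulr_ge0 // divr_ge0 // ltW // (lt_trans hlam).
pose C : R := if m is 0 then 0 else Rad `^ (- eps).
have C0 : 0 <= C by rewrite /C; case: (m) => [|k]; rewrite ?lexx ?powR_ge0.
have hC : (0 < m)%N -> Rad `^ (2 - eps) <= C * Rad ^+ 2.
  rewrite /C; case: (m) => // k _; rewrite powRD; last by rewrite (gt_eqF R0) implybT.
  by rewrite mulrC -(powR_mulrn _ (ltW R0)).
have h1d : m = 0%N -> forall x : 'rV[R]_m.+1, enorm x = Rad -> -1 < dotv x nu -> dotv x nu <= 0 -> False.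
  move=> m0 x hx t1 t2; move: nu x hnu2 hx t1 t2 {hnu hcont Hsub Hsup HNsub HNsup HD hbd hf hg}.
  rewrite m0 => nu x hnu2 hx t1 t2.
  have := oneD_fact x hnu2; rewrite -enorm_sq hx => e.
  have : 1 <= Rad ^+ 2 by rewrite expr2 mulr_ege1.
  rewrite e; nra.
have key : forall mu, 0 < mu -> forall x, strip nu x -> enorm x <= Rad ->
  u x <= phi nu (2 * (delta + mu) + C * (K + 1)) (delta + mu) (2 * C)
                (- (2 * C * (K + 1)) - 2 * mu) x /\
  - u x <= phi nu (2 * (delta + mu) + C * (K + 1)) (delta + mu) (2 * C)
                (- (2 * C * (K + 1)) - 2 * mu) x.
  move=> mu mu0.
  set c0 := 2 * (delta + mu) + C * (K + 1); set c1 := delta + mu.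
  set al := 2 * C; set be := - (2 * C * (K + 1)) - 2 * mu.
  have lm0 : 0 < lam * mu by rewrite mulr_gt0.
  have CK0 : 0 <= C * K by rewrite mulr_ge0.
  have Pp : pucci_plus lam Lam (Hm nu al be) = - (2 * (lam * mu)).
    rewrite /Hm pucci_plus_H //; last by rewrite /al /be; lra.
      have e : C * (lam * K) = C * (m%:R * Lam) by rewrite hK.
      rewrite /al /be; lra.
    by rewrite /al mulr_ge0.
  have Pm : pucci_minus lam Lam (Hm nu (- al) (- be)) = 2 * (lam * mu).
    rewrite /Hm pucci_minus_H //; last by rewrite /al /be; lra.
      have e : C * (lam * K) = C * (m%:R * Lam) by rewrite hK.
      rewrite /al /be; lra.
    by rewrite /al oppr_le0 mulr_ge0.
  have phv x : phi nu c0 c1 al be x = 2 * (delta + mu) + C * (K + 1)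
     + (delta + mu) * dotv x nu + C * dotv x x - (C * (K + 1) + mu) * dotv x nu ^+ 2.
    by rewrite /phi /c0 /c1 /al /be; field.
  have HDir x : dotv x nu = -1 -> enorm x <= Rad -> `|u x| <= delta.
    by move=> t bx; rewrite (HD x t bx); apply: hf.
  have phD x : dotv x nu = -1 -> delta <= phi nu c0 c1 al be x.
    move=> t; rewrite phv t.
    have := mulr_ge0 C0 (dotvv_ge0 x); lra.
  have phS x : strip nu x -> enorm x = Rad -> -1 < dotv x nu ->
      `|u x| <= phi nu c0 c1 al be x.
    move=> sx rx t1; move: (sx) => /andP[_ t2].
    case: (posnP m) => [m0|mpos].
      by exfalso; apply: (h1d m0 x rx t1 t2).
    apply: le_trans (hbd x sx rx) _; apply: le_trans (hC mpos) _.
    rewrite phv -enorm_sq rx.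
    set t := dotv x nu.
    have tt : t ^+ 2 <= 1.
      have ha : 0 <= t + 1 by rewrite /t; lra.
      have hb : 0 <= - t by rewrite oppr_ge0.
      have := mulr_ge0 ha hb; rewrite expr2; lra.
    have h1 : 0 <= C * (K + 1) * (1 - t ^+ 2) by rewrite !mulr_ge0 ?subr_ge0 // addr_ge0.
    have h2 : mu * t ^+ 2 <= mu by rewrite ler_piMr // ltW.
    have h3 : 0 <= delta * (1 + t) by rewrite mulr_ge0 // /t; lra.
    have h4 : 0 <= mu * (1 + t) by rewrite mulr_ge0 ?(ltW mu0) // /t; lra.
    lra.
  have Up : forall x, strip nu x -> enorm x <= Rad -> u x <= phi nu c0 c1 al be x.
    apply: (@compare _ _ nu c0 c1 al be hnu2 Rad u (ltW R0) hcont).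
    + move=> x t bx; have := HDir x t bx; have := phD x t.
      have := ler_norm (u x); lra.
    + move=> x sx rx t1; apply: le_trans (phS x sx rx t1); exact: ler_norm.
    move=> x t1 t2 rx d dd0 Hloc.
    have sj := superjet_max dd0 Hloc.
    move: t2; rewrite le_eqVlt => /orP[/eqP t0|tn].
      have := HNsub x _ _ t0 rx sj; rewrite Pp Dphi_nu // t0 !mulr0 !addr0.
      have := hg x t0 (ltW rx); rewrite ge_min /c1 => hgx /orP[]; 
        [lra | have := ler_norm (g x); lra].
    have := Hsub x _ _ _ rx sj; rewrite Pp t1 tn => /(_ isT); lra.
  have Lo : forall x, strip nu x -> enorm x <= Rad -> - u x <= phi nu c0 c1 al be x.
    apply: (@compare _ _ nu c0 c1 al be hnu2 Rad (fun x => - u x) (ltW R0)).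
    + move=> x sx e e0; have [d dd0 Hd] := hcont x sx e e0.
      by exists d => // y sy hy; rewrite -opprD normrN; apply: Hd.
    + move=> x t bx; have := HDir x t bx; have := phD x t.
      have := ler_norm (u x); rewrite -normrN; have := ler_norm (- u x); lra.
    + move=> x sx rx t1; apply: le_trans (phS x sx rx t1).
      by rewrite -normrN ler_norm.
    move=> x t1 t2 rx d dd0 Hloc.
    have sj := subjet_max dd0 Hloc.
    move: t2; rewrite le_eqVlt => /orP[/eqP t0|tn].
      have := HNsup x _ _ t0 rx sj; rewrite Pm dotvNl Dphi_nu // t0 !mulr0 !addr0.
      have := hg x t0 (ltW rx); rewrite le_max /c1 => hgx /orP[];
        [lra | have := ler_norm (- g x); rewrite normrN; lra].
    have := Hsup x _ _ _ rx sj; rewrite Pm t1 tn => /(_ isT); lra.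
  by move=> x sx bx; split; [apply: Up | apply: Lo].
move=> x sx bx1.
have bxR : enorm x <= Rad := le_trans bx1 hR.
have q1 : dotv x x <= 1.
  rewrite -enorm_sq; have := enorm_ge0 x => h0.
  by rewrite expr2; apply: mulr_ile1.
move: (sx) => /andP[t1 t2].
have main : `|u x| <= 2 * delta + C * (K + 2).
  rewrite leNgt; apply/negP => hlt.
  pose mu := (`|u x| - (2 * delta + C * (K + 2))) / 4.
  have mu0 : 0 < mu by rewrite /mu divr_gt0 // subr_gt0.
  have [h1 h2] := key mu mu0 x sx bxR.
  have hph : phi nu (2 * (delta + mu) + C * (K + 1)) (delta + mu) (2 * C)
                (- (2 * C * (K + 1)) - 2 * mu) x <= 2 * (delta + mu) + C * (K + 2).
    have -> : phi nu (2 * (delta + mu) + C * (K + 1)) (delta + mu) (2 * C)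
                (- (2 * C * (K + 1)) - 2 * mu) x = 2 * (delta + mu) + C * (K + 1)
     + (delta + mu) * dotv x nu + C * dotv x x - (C * (K + 1) + mu) * dotv x nu ^+ 2.
      by rewrite /phi; field.
    have a1 : (delta + mu) * dotv x nu <= 0 by rewrite mulr_ge0_le0 // addr_ge0 // ltW.
    have a2 : C * dotv x x <= C by rewrite ler_piMr.
    have a3 : 0 <= (C * (K + 1) + mu) * dotv x nu ^+ 2.
      by rewrite mulr_ge0 ?sqr_ge0 // addr_ge0 ?(ltW mu0) // mulr_ge0 // addr_ge0.
    lra.
  have : `|u x| <= 2 * (delta + mu) + C * (K + 2).
    by rewrite ler_norml; apply/andP; split; lra.
  rewrite /mu; lra.
apply: le_trans main _; rewrite subn1 /= /C /K.
case: (m) => [|k].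
  by rewrite ?mulr0n ?mul0r ?mulr0 ?mul0r ?addr0.
set P := Rad `^ (- eps); set N : R := k.+1%:R; set r := Lam / lam.
have P0 : 0 <= P by apply: powR_ge0.
have r1 : 1 <= r by rewrite /r ler_pdivlMr // mul1r ltW.
have N1 : 1 <= N by rewrite /N ler1n.
have Nr : 1 <= N * r by apply: mulr_ege1.
have Nr' : 0 <= N * r - 1 by rewrite subr_ge0.
have := mulr_ge0 P0 Nr'.
rewrite lerD2l; nra.
Qed.
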